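(* For each $\beta>0$ there exists a radial weight $\nu\in\widehat{\mathcal{D}}$ such that $\nu_{[\beta]}\notin\widehat{\mathcal{D}}$, where $\nu_{[\beta]}(z)=\nu(z)(1-|z|)^\beta$.
   Context: A radial weight is a non-negative $\omega\in L^1([0,1))$, extended to the unit disc by $\omega(z)=\omega(|z|)$, with $\widehat{\omega}(r)=\int_r^1\omega(s)\,ds>0$ for all $0\le r<1$. A radial weight $\nu$ belongs to $\widehat{\mathcal{D}}$ if there is $C\ge1$ with $\widehat{\nu}(r)\le C\,\widehat{\nu}\big(\frac{1+r}{2}\big)$ for all $0\le r<1$. *)

(* Defs.v *)
From Stdlib Require Import Reals Lra.
Open Scope R_scope.

(* [has_tail w r L]: the (improper Riemann) integral \int_r^1 w(s) ds exists
   and equals L, i.e. w is Riemann integrable on every [r,b] with b<1 and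
   \int_r^b w -> L as b -> 1^-.  For nonnegative w this is the Lebesgue
   integral over [r,1). *)
Definition has_tail (w : R -> R) (r L : R) : Prop :=
  (forall b, r <= b < 1 -> exists _ : Riemann_integrable w r b, True) /\
  (forall eps, 0 < eps -> exists delta, 0 < delta /\
     forall b (pr : Riemann_integrable w r b),
       r <= b -> 1 - delta < b < 1 -> Rabs (RiemannInt pr - L) < eps).

Definition radial_weight (w : R -> R) : Prop :=
  (forall s, 0 <= s < 1 -> 0 <= w s) /\
  (forall r, 0 <= r < 1 -> exists L, has_tail w r L /\ 0 < L).

Definition Dhat (w : R -> R) : Prop :=
  radial_weight w /\
  exists C, 1 <= C /\
    forall r L1 L2, 0 <= r < 1 ->
      has_tail w r L1 -> has_tail w ((1 + r) / 2) L2 -> L1 <= C * L2.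

Definition weight_beta (nu : R -> R) (beta : R) : R -> R :=
  fun s => nu s * Rpower (1 - s) beta.

(* Main.v *)
Require Import Defs.
From Stdlib Require Import Reals Lra Lia ClassicalEpsilon.
From Coquelicot Require Import Coquelicot.
Open Scope R_scope.

Lemma exp_le_exp x y : x <= y -> exp x <= exp y.
Proof. intros [h|h]; [left; apply exp_increasing; auto | subst; lra]. Qed.

Lemma ln_le' x y : 0 < x -> x <= y -> ln x <= ln y.
Proof. intros h [h'|h']; [left; apply ln_increasing; auto | subst; lra]. Qed.

Definition p (j : nat) : R := 1 - exp (- INR j).

Lemma p0 : p 0 = 0.
Proof. unfold p; simpl; rewrite Ropp_0, exp_0; lra. Qed.

Lemma p_lt1 j : p j < 1.
Proof. unfold p; pose proof (exp_pos (- INR j)); lra. Qed.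

Lemma p_ge0 j : 0 <= p j.
Proof. unfold p. assert (exp (- INR j) <= 1).
  { rewrite <- exp_0. apply exp_le_exp. pose proof (pos_INR j); lra. } lra. Qed.

Lemma p_le j k : (j <= k)%nat -> p j <= p k.
Proof. intros H; unfold p. apply le_INR in H.
  assert (exp (- INR k) <= exp (- INR j)) by (apply exp_le_exp; lra). lra. Qed.

Lemma p_lt j k : (j < k)%nat -> p j < p k.
Proof. intros H; unfold p. apply lt_INR in H.
  assert (exp (- INR k) < exp (- INR j)) by (apply exp_increasing; lra). lra. Qed.

Lemma piece_exists s : 0 <= s < 1 -> exists j, p j <= s < p (S j).
Proof.
  intros Hs.
  assert (HN : exists N, s < p N).
  { destruct (INR_unbounded (- ln (1 - s))) as [N HN]. exists N. unfold p.
    assert (exp (- INR N) < 1 - s).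
    { rewrite <- (exp_ln (1 - s)) by lra. apply exp_increasing. lra. }
    lra. }
  destruct HN as [N HN]. induction N.
  - rewrite p0 in HN; lra.
  - destruct (Rlt_or_le s (p N)) as [h|h].
    + apply IHN; exact h.
    + exists N; split; auto.
Qed.

Lemma piece_unique s j k : p j <= s < p (S j) -> p k <= s < p (S k) -> j = k.
Proof.
  intros Hj Hk. destruct (Nat.lt_trichotomy j k) as [h|[h|h]]; auto.
  - assert (p (S j) <= p k) by (apply p_le; lia). lra.
  - assert (p (S k) <= p j) by (apply p_le; lia). lra.
Qed.

Definition idx (s : R) : nat := epsilon (inhabits 0%nat) (fun j => p j <= s < p (S j)).

Lemma idx_spec s : 0 <= s < 1 -> p (idx s) <= s < p (S (idx s)).
Proof. intros Hs. unfold idx. apply epsilon_spec. apply piece_exists; auto. Qed.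

Lemma idx_eq s j : p j <= s < p (S j) -> idx s = j.
Proof. intros H. apply (piece_unique s). 2: exact H. apply idx_spec.
  pose proof (p_ge0 j); pose proof (p_lt1 (S j)); lra. Qed.

Definition isq (j : nat) : bool := Nat.eqb (Nat.sqrt j * Nat.sqrt j) j.

Definition kk (j : nat) : R := if isq j then exp (INR j - INR (Nat.sqrt j)) else 0.

Definition nu (s : R) : R := kk (idx s).

Lemma kk_ge0 j : 0 <= kk j.
Proof. unfold kk; destruct (isq j); [left; apply exp_pos | lra]. Qed.

Lemma nu_ge0 s : 0 <= nu s.
Proof. apply kk_ge0. Qed.

Lemma nu_piece j s : p j <= s < p (S j) -> nu s = kk j.
Proof. intros H; unfold nu; rewrite (idx_eq s j H); auto. Qed.

Definition integ (w : R -> R) := forall r b, 0 <= r -> r <= b -> b < 1 -> ex_RInt w r b.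
Definition nonneg (w : R -> R) := forall s, 0 <= s < 1 -> 0 <= w s.

Lemma exR_pieces (w : R -> R) (g : nat -> R -> R) :
  (forall j, ex_RInt (g j) (p j) (p (S j))) ->
  (forall j s, p j < s < p (S j) -> w s = g j s) ->
  forall N, ex_RInt w 0 (p N).
Proof.
  intros Hg Hw N. induction N.
  - rewrite p0. apply ex_RInt_point.
  - apply ex_RInt_Chasles with (p N); auto.
    apply ex_RInt_ext with (g N); [|apply Hg].
    intros x Hx. rewrite Rmin_left in Hx by (apply p_le; lia).
    rewrite Rmax_right in Hx by (apply p_le; lia). symmetry; apply Hw; auto.
Qed.

Lemma exists_p_ge b : b < 1 -> exists N, b <= p N.
Proof.
  intros Hb. destruct (INR_unbounded (- ln (1 - b))) as [N HN]. exists N. unfold p.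
  assert (exp (- INR N) < 1 - b).
  { rewrite <- (exp_ln (1 - b)) by lra. apply exp_increasing. lra. }
  lra.
Qed.

Lemma integ_pieces (w : R -> R) (g : nat -> R -> R) :
  (forall j, ex_RInt (g j) (p j) (p (S j))) ->
  (forall j s, p j < s < p (S j) -> w s = g j s) -> integ w.
Proof.
  intros Hg Hw r b H1 H2 H3. destruct (exists_p_ge b H3) as [N HN].
  pose proof (exR_pieces w g Hg Hw N) as H.
  apply (ex_RInt_Chasles_2 w 0 r b); [lra|].
  apply (ex_RInt_Chasles_1 w 0 b (p N)); [lra|auto].
Qed.

Lemma chasles w a c b : ex_RInt w a c -> ex_RInt w c b ->
  RInt w a b = RInt w a c + RInt w c b.
Proof. intros H1 H2. rewrite <- (RInt_Chasles w a c b H1 H2). reflexivity. Qed.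

Lemma RInt_nonneg w a b : integ w -> nonneg w -> 0 <= a -> a <= b -> b < 1 -> 0 <= RInt w a b.
Proof. intros Hi Hn H1 H2 H3. apply RInt_ge_0; auto. intros x Hx; apply Hn; lra. Qed.

Lemma RInt_sub w a c d b : integ w -> nonneg w -> 0 <= a -> a <= c -> c <= d -> d <= b -> b < 1 ->
  RInt w c d <= RInt w a b.
Proof.
  intros Hi Hn H1 H2 H3 H4 H5.
  rewrite (chasles w a c b) by (apply Hi; lra).
  rewrite (chasles w c d b) by (apply Hi; lra).
  pose proof (RInt_nonneg w a c Hi Hn); pose proof (RInt_nonneg w d b Hi Hn). lra.
Qed.

Lemma RInt_eq_Riemann w a b (pr : Riemann_integrable w a b) : RiemannInt pr = RInt w a b.
Proof. symmetry; apply RInt_Reals. Qed.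

Lemma tail_ge w r L b : integ w -> nonneg w -> has_tail w r L -> 0 <= r -> r <= b -> b < 1 ->
  RInt w r b <= L.
Proof.
  intros Hi Hn [_ Ht] H1 H2 H3. apply Rnot_lt_le; intros Hc.
  destruct (Ht (RInt w r b - L)) as [d [Hd Hb]]; [lra|].
  set (b' := Rmax b (1 - d/2)).
  assert (Hb1 : b <= b') by apply Rmax_l. assert (Hb2 : 1 - d/2 <= b') by apply Rmax_r.
  assert (Hb3 : b' < 1) by (unfold b'; apply Rmax_lub_lt; lra).
  pose (pr := ex_RInt_Reals_0 w r b' (Hi r b' H1 ltac:(lra) Hb3)).
  specialize (Hb b' pr ltac:(lra) ltac:(lra)). rewrite RInt_eq_Riemann in Hb.
  pose proof (RInt_sub w r r b b' Hi Hn H1 ltac:(lra) H2 Hb1 Hb3).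
  apply Rabs_def2 in Hb. lra.
Qed.

Lemma tail_le w r L B : integ w -> has_tail w r L -> 0 <= r < 1 ->
  (forall b, r <= b < 1 -> RInt w r b <= B) -> L <= B.
Proof.
  intros Hi [_ Ht] H1 HB. apply Rnot_lt_le; intros Hc.
  destruct (Ht (L - B)) as [d [Hd Hb]]; [lra|].
  set (b' := Rmax r (1 - d/2)).
  assert (Hb1 : r <= b') by apply Rmax_l. assert (Hb2 : 1 - d/2 <= b') by apply Rmax_r.
  assert (Hb3 : b' < 1) by (unfold b'; apply Rmax_lub_lt; lra).
  pose (pr := ex_RInt_Reals_0 w r b' (Hi r b' ltac:(lra) Hb1 Hb3)).
  specialize (Hb b' pr ltac:(lra) ltac:(lra)). rewrite RInt_eq_Riemann in Hb.
  specialize (HB b' ltac:(lra)). apply Rabs_def2 in Hb. lra.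
Qed.

Lemma tail_chasles w r m L L' : integ w -> has_tail w r L -> has_tail w m L' ->
  0 <= r -> r <= m -> m < 1 -> L = RInt w r m + L'.
Proof.
  intros Hi [_ Ht] [_ Ht'] H1 H2 H3.
  destruct (Req_dec L (RInt w r m + L')) as [E|E]; auto. exfalso.
  set (eps := Rabs (L - (RInt w r m + L')) / 2).
  assert (Heps : 0 < eps) by (unfold eps; assert (0 < Rabs (L - (RInt w r m + L'))) by (apply Rabs_pos_lt; lra); lra).
  destruct (Ht eps Heps) as [d [Hd Hb]]. destruct (Ht' eps Heps) as [d' [Hd' Hb']].
  set (b' := Rmax m (1 - Rmin d d'/2)).
  assert (Hmin1 : Rmin d d' <= d) by apply Rmin_l. assert (Hmin2 : Rmin d d' <= d') by apply Rmin_r.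
  assert (Hmin3 : 0 < Rmin d d') by (apply Rmin_glb_lt; auto).
  assert (Hb1 : m <= b') by apply Rmax_l. assert (Hb2 : 1 - Rmin d d'/2 <= b') by apply Rmax_r.
  assert (Hb3 : b' < 1) by (unfold b'; apply Rmax_lub_lt; lra).
  pose (pr := ex_RInt_Reals_0 w r b' (Hi r b' ltac:(lra) ltac:(lra) Hb3)).
  pose (pr' := ex_RInt_Reals_0 w m b' (Hi m b' ltac:(lra) ltac:(lra) Hb3)).
  specialize (Hb b' pr ltac:(lra) ltac:(lra)). rewrite RInt_eq_Riemann in Hb.
  specialize (Hb' b' pr' ltac:(lra) ltac:(lra)). rewrite RInt_eq_Riemann in Hb'.
  rewrite (chasles w r m b') in Hb by (apply Hi; lra).
  unfold eps in *. revert Hb Hb'. generalize (RInt w r m) (RInt w m b'). intros x y.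
  unfold Rabs; repeat destruct Rcase_abs; lra.
Qed.

Lemma tail_exists w r B : integ w -> nonneg w -> 0 <= r < 1 ->
  (forall b, r <= b < 1 -> RInt w r b <= B) -> exists L, has_tail w r L.
Proof.
  intros Hi Hn Hr HB.
  set (E := fun x => exists b, r <= b < 1 /\ x = RInt w r b).
  assert (Hbd : bound E) by (exists B; intros x [b [Hb ->]]; apply HB; auto).
  assert (Hne : exists x, E x) by (exists (RInt w r r); exists r; split; [lra|auto]).
  destruct (completeness E Hbd Hne) as [L [HL1 HL2]].
  exists L. split.
  - intros b Hb. exists (ex_RInt_Reals_0 w r b (Hi r b ltac:(lra) ltac:(lra) ltac:(lra))). auto.
  - intros eps Heps.
    assert (Hx : exists b0, r <= b0 < 1 /\ L - eps < RInt w r b0).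
    { apply NNPP; intros Hc. assert (L <= L - eps); [|lra].
      apply HL2. intros x [b [Hb ->]]. apply Rnot_lt_le; intros Hc2. apply Hc; exists b; split; auto. }
    destruct Hx as [b0 [Hb0 Hlt]]. exists (1 - b0). split; [lra|].
    intros b pr Hrb Hbb. rewrite RInt_eq_Riemann.
    assert (RInt w r b <= L) by (apply HL1; exists b; split; [lra|auto]).
    pose proof (RInt_sub w r r b0 b Hi Hn ltac:(lra) ltac:(lra) ltac:(lra) ltac:(lra) ltac:(lra)).
    unfold Rabs; destruct Rcase_abs; lra.
Qed.

Definition cc := 1 - exp (-1).
Definition M (j : nat) : R := kk j * (p (S j) - p j).

Lemma cc_pos : 0 < cc.
Proof. unfold cc. assert (exp (-1) < exp 0) by (apply exp_increasing; lra). rewrite exp_0 in H; lra. Qed.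

Lemma p_diff j : p (S j) - p j = exp (- INR j) * cc.
Proof. unfold p, cc. rewrite S_INR. replace (- (INR j + 1)) with (- INR j + - 1) by ring.
  rewrite exp_plus. ring. Qed.

Lemma M_sq q : M (q * q) = exp (- INR q) * cc.
Proof. unfold M, kk, isq. rewrite Nat.sqrt_square, Nat.eqb_refl, p_diff.
  rewrite <- Rmult_assoc, <- exp_plus. f_equal. f_equal. rewrite mult_INR. ring. Qed.

Lemma M_le j : M j <= exp (- INR (Nat.sqrt j)) * cc.
Proof. unfold M, kk. destruct (isq j) eqn:E.
  - rewrite p_diff, <- Rmult_assoc, <- exp_plus. right. f_equal. f_equal. ring.
  - pose proof (exp_pos (- INR (Nat.sqrt j))); pose proof cc_pos. rewrite Rmult_0_l. nra.
Qed.

Lemma M_ge0 j : 0 <= M j.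
Proof. unfold M. pose proof (kk_ge0 j). pose proof (p_le j (S j) ltac:(lia)). nra. Qed.

Lemma nu_integ : integ nu.
Proof.
  apply integ_pieces with (g := fun j _ => kk j).
  - intros j; apply ex_RInt_const.
  - intros j s Hs. apply nu_piece; lra.
Qed.

Lemma nu_nonneg : nonneg nu.
Proof. intros s _; apply nu_ge0. Qed.

Lemma RInt_nu_piece j : RInt nu (p j) (p (S j)) = M j.
Proof.
  rewrite (RInt_ext nu (fun _ => kk j)).
  - rewrite RInt_const. unfold M. simpl. unfold scal; simpl; unfold mult; simpl. ring.
  - intros x Hx. rewrite Rmin_left in Hx by (apply p_le; lia).
    rewrite Rmax_right in Hx by (apply p_le; lia). apply nu_piece; lra.
Qed.

Lemma sqrt_up_next_sq q : Nat.sqrt_up (S (q * q)) = S q.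
Proof. apply Nat.sqrt_up_unique; simpl; nia. Qed.

Lemma sqrt_up_next_nsq N : isq N = false -> Nat.sqrt_up (S N) = Nat.sqrt_up N.
Proof.
  intros H. unfold isq in H. apply Nat.eqb_neq in H.
  destruct N as [|N]. { simpl in H; lia. }
  pose proof (Nat.sqrt_up_spec (S N) ltac:(lia)) as Hs.
  set (s := Nat.sqrt_up (S N)) in *.
  assert (Hne : (S N <> s * s)%nat).
  { intros E. apply H. rewrite E, Nat.sqrt_square. auto. }
  apply Nat.sqrt_up_unique.
  - destruct s; simpl in *; lia.
  - lia.
Qed.

Definition I N : R := RInt nu 0 (p N).

Lemma I_formula N : I N = 1 - exp (- INR (Nat.sqrt_up N)).
Proof.
  induction N.
  - unfold I; rewrite p0, RInt_point. simpl. rewrite Ropp_0, exp_0. unfold zero; simpl; ring.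
  - unfold I in *. rewrite (chasles nu 0 (p N) (p (S N))).
    2: apply nu_integ; [lra | apply p_ge0 | apply p_lt1].
    2: apply nu_integ; [apply p_ge0 | apply p_le; lia | apply p_lt1].
    rewrite IHN, RInt_nu_piece. destruct (isq N) eqn:E.
    + pose proof E as E'. unfold isq in E'. apply Nat.eqb_eq in E'. 
      set (q := Nat.sqrt N) in *. rewrite <- E'.
      rewrite sqrt_up_next_sq, Nat.sqrt_up_square by lia. rewrite M_sq, S_INR.
      unfold cc. replace (- (INR q + 1)) with (- INR q + - 1) by ring. rewrite exp_plus. ring.
    + rewrite sqrt_up_next_nsq by auto. unfold M, kk; rewrite E. ring.
Qed.

Lemma I_le1 N : I N <= 1.
Proof. rewrite I_formula. pose proof (exp_pos (- INR (Nat.sqrt_up N))); lra. Qed.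

Lemma nu_bound r b : 0 <= r -> r <= b -> b < 1 -> RInt nu r b <= 1.
Proof.
  intros H1 H2 H3. destruct (exists_p_ge b H3) as [N HN].
  pose proof (I_le1 N). unfold I in H.
  pose proof (RInt_sub nu 0 r b (p N) nu_integ nu_nonneg ltac:(lra) H1 H2 HN (p_lt1 N)). lra.
Qed.

Lemma isq_sq q : isq (q * q) = true.
Proof. unfold isq; rewrite Nat.sqrt_square; apply Nat.eqb_refl. Qed.

Lemma piece_of r : 0 <= r < 1 -> { i | p i <= r < p (S i) }.
Proof. intros H. exists (idx r). apply idx_spec; auto. Qed.

Lemma nu_radial : radial_weight nu.
Proof.
  split. { intros s _; apply nu_ge0. }
  intros r Hr. destruct (tail_exists nu r 1 nu_integ nu_nonneg Hr) as [L HL].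
  { intros b Hb; apply nu_bound; lra. }
  exists L; split; auto.
  destruct (piece_of r Hr) as [i Hi].
  set (j := (S i * S i)%nat).
  assert (Hj : p (S i) <= p j) by (apply p_le; unfold j; nia).
  pose proof (tail_ge nu r L (p (S j)) nu_integ nu_nonneg HL ltac:(lra)
     ltac:(pose proof (p_le j (S j) ltac:(lia)); lra) (p_lt1 _)).
  pose proof (RInt_sub nu r (p j) (p (S j)) (p (S j)) nu_integ nu_nonneg ltac:(lra) ltac:(lra)
     (p_le j (S j) ltac:(lia)) ltac:(lra) (p_lt1 _)).
  rewrite RInt_nu_piece in H0. unfold j in *. rewrite M_sq in H0.
  pose proof (exp_pos (- INR (S i))); pose proof cc_pos. nra.
Qed.

Lemma e_gt2 : 2 < exp 1.
Proof. pose proof (exp_ineq1 1 ltac:(lra)); lra. Qed.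

Lemma em1_lt : exp (-1) * 2 < 1.
Proof. pose proof e_gt2. assert (exp 1 * exp (-1) = 1) by (rewrite <- exp_plus; replace (1 + -1) with 0 by ring; apply exp_0).
  pose proof (exp_pos (-1)). nra. Qed.

Lemma sqrt_succ_le i : (Nat.sqrt (S i) <= S (Nat.sqrt i))%nat.
Proof.
  pose proof (Nat.sqrt_spec i ltac:(lia)). pose proof (Nat.sqrt_spec (S i) ltac:(lia)).
  set (a := Nat.sqrt i) in *. set (b := Nat.sqrt (S i)) in *.
  destruct (Nat.le_gt_cases b (S a)) as [h|h]; auto.
  assert (S (S a) * S (S a) <= b * b)%nat by (apply Nat.mul_le_mono; lia). nia.
Qed.

Lemma Dhat_nu : Dhat nu.
Proof.
  split; [apply nu_radial|]. exists 13. split; [lra|].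
  intros r L1 L2 Hr H1 H2.
  destruct (piece_of r Hr) as [i Hi].
  set (m := (1 + r) / 2) in *.
  assert (Hm : m < p (S (S i))).
  { unfold m. destruct Hi as [_ Hi]. unfold p in *. rewrite !S_INR in *.
    replace (- (INR i + 1 + 1)) with (- (INR i + 1) + -1) by ring. rewrite exp_plus.
    pose proof em1_lt. pose proof (exp_pos (- (INR i + 1))). nra. }
  assert (Hm1 : p (S (S i)) < 1) by apply p_lt1.
  assert (Hrm : r <= m) by (unfold m; lra).
  pose proof (tail_chasles nu r m L1 L2 nu_integ H1 H2 ltac:(lra) Hrm ltac:(lra)) as EL.
  pose proof (RInt_sub nu (p i) r m (p (S (S i))) nu_integ nu_nonneg (p_ge0 i) ltac:(lra) Hrm
     ltac:(lra) Hm1) as HI.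
  rewrite (chasles nu (p i) (p (S i)) (p (S (S i)))) in HI.
  2: apply nu_integ; [apply p_ge0 | apply p_le; lia | apply p_lt1].
  2: apply nu_integ; [apply p_ge0 | apply p_le; lia | apply p_lt1].
  rewrite !RInt_nu_piece in HI.
  set (n := Nat.sqrt (S i)).
  set (j := (S n * S n)%nat).
  assert (Hj : (S (S i) <= j)%nat).
  { pose proof (Nat.sqrt_spec (S i) ltac:(lia)). unfold j, n. lia. }
  assert (Hpj : p (S (S i)) <= p j) by (apply p_le; auto).
  pose proof (tail_ge nu m L2 (p (S j)) nu_integ nu_nonneg H2 ltac:(unfold m; lra)
     ltac:(pose proof (p_le j (S j) ltac:(lia)); lra) (p_lt1 _)) as HL2.
  pose proof (RInt_sub nu m (p j) (p (S j)) (p (S j)) nu_integ nu_nonneg ltac:(unfold m; lra) ltac:(lra)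
     (p_le j (S j) ltac:(lia)) ltac:(lra) (p_lt1 _)) as HL2'.
  rewrite RInt_nu_piece in HL2'. unfold j in HL2', HL2. rewrite M_sq in HL2'.
  pose proof (M_le i) as Mi. pose proof (M_le (S i)) as Msi. fold n in Msi.
  pose proof (sqrt_succ_le i) as Hsq. fold n in Hsq.
  assert (Ea : exp (- INR (Nat.sqrt i)) <= exp (- INR (S n)) * (exp 1 * exp 1)).
  { rewrite <- !exp_plus. apply exp_le_exp. apply le_INR in Hsq. rewrite !S_INR in *. lra. }
  assert (Eb : exp (- INR n) = exp (- INR (S n)) * exp 1).
  { rewrite <- exp_plus. f_equal. rewrite S_INR. ring. }
  pose proof exp_le_3. pose proof e_gt2. pose proof cc_pos. pose proof (exp_pos (- INR (S n))).
  assert (exp 1 * exp 1 <= 9) by nra.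
  assert (M i + M (S i) <= 12 * (exp (- INR (S n)) * cc)).
  { rewrite Eb in Msi.
    assert (exp (- INR (Nat.sqrt i)) * cc <= exp (- INR (S n)) * (exp 1 * exp 1) * cc)
      by (apply Rmult_le_compat_r; lra).
    assert (exp (- INR (S n)) * (exp 1 * exp 1) * cc <= exp (- INR (S n)) * 9 * cc).
    { apply Rmult_le_compat_r; [lra|]. apply Rmult_le_compat_l; lra. }
    assert (exp (- INR (S n)) * exp 1 * cc <= exp (- INR (S n)) * 3 * cc).
    { apply Rmult_le_compat_r; [lra|]. apply Rmult_le_compat_l; lra. }
    lra. }
  assert (0 < exp (- INR (S n)) * cc) by nra.
  lra.
Qed.

Section NB.
Variable beta : R.
Hypothesis hb : 0 < beta.

Definition nb := weight_beta nu beta.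

Lemma Rpow_le1 s : 0 <= s < 1 -> Rpower (1 - s) beta <= 1.
Proof. intros Hs. unfold Rpower. apply Rle_trans with (exp 0); [|rewrite exp_0; lra]. apply exp_le_exp.
  assert (ln (1 - s) <= ln 1) by (apply ln_le'; lra). rewrite ln_1 in H. nra. Qed.

Lemma nb_nonneg : nonneg nb.
Proof. intros s _. unfold nb, weight_beta. pose proof (nu_ge0 s).
  assert (0 < Rpower (1 - s) beta) by (unfold Rpower; apply exp_pos). nra. Qed.

Lemma nb_integ : integ nb.
Proof.
  apply integ_pieces with (g := fun j s => kk j * Rpower (1 - s) beta).
  - intros j. apply (@ex_RInt_continuous R_CompleteNormedModule). intros z Hz.
    rewrite Rmin_left in Hz by (apply p_le; lia).
    rewrite Rmax_right in Hz by (apply p_le; lia).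
    pose proof (p_lt1 (S j)).
    apply (@ex_derive_continuous R_AbsRing R_NormedModule (fun s => kk j * Rpower (1 - s) beta)). unfold Rpower. auto_derive. lra.
  - intros j s Hs. unfold nb, weight_beta. rewrite (nu_piece j s) by lra. auto.
Qed.

Lemma nb_le_nu s : 0 <= s < 1 -> nb s <= nu s.
Proof. intros Hs. unfold nb, weight_beta. pose proof (nu_ge0 s). pose proof (Rpow_le1 s Hs). nra. Qed.

Lemma nb_le_nu_int r b : 0 <= r -> r <= b -> b < 1 -> RInt nb r b <= RInt nu r b.
Proof. intros. apply RInt_le; auto. apply nb_integ; auto. apply nu_integ; auto.
  intros x Hx; apply nb_le_nu; lra. Qed.

Lemma nb_piece_lower j a b : p j <= a -> a <= b -> b <= p (S j) ->
  (b - a) * (kk j * Rpower (1 - b) beta) <= RInt nb a b.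
Proof.
  intros H1 H2 H3. pose proof (p_lt1 (S j)). pose proof (p_ge0 j).
  rewrite <- (RInt_const a b (kk j * Rpower (1 - b) beta)) at 1.
  - apply RInt_le; auto. apply ex_RInt_const. apply nb_integ; lra.
    intros x Hx. unfold nb, weight_beta. rewrite (nu_piece j x) by lra.
    apply Rmult_le_compat_l. apply kk_ge0. apply Rle_Rpower_l; lra.
Qed.

Lemma nb_radial : radial_weight nb.
Proof.
  split. { apply nb_nonneg. }
  intros r Hr. destruct (tail_exists nb r 1 nb_integ nb_nonneg Hr) as [L HL].
  { intros b Hb. pose proof (nb_le_nu_int r b ltac:(lra) ltac:(lra) ltac:(lra)).
    pose proof (nu_bound r b ltac:(lra) ltac:(lra) ltac:(lra)). lra. }
  exists L; split; auto.
  destruct (piece_of r Hr) as [i Hi].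
  set (j := (S i * S i)%nat) in *.
  assert (Hj : p (S i) <= p j) by (apply p_le; unfold j; nia).
  pose proof (p_le j (S j) ltac:(lia)). pose proof (p_lt1 (S j)).
  pose proof (tail_ge nb r L (p (S j)) nb_integ nb_nonneg HL ltac:(lra) ltac:(lra) (p_lt1 _)).
  pose proof (RInt_sub nb r (p j) (p (S j)) (p (S j)) nb_integ nb_nonneg ltac:(lra) ltac:(lra)
     ltac:(lra) ltac:(lra) (p_lt1 _)).
  pose proof (nb_piece_lower j (p j) (p (S j)) ltac:(lra) ltac:(lra) ltac:(lra)).
  assert (0 < p (S j) - p j) by (apply Rlt_Rminus; apply p_lt; lia).
  assert (0 < kk j) by (unfold j, kk; rewrite isq_sq; apply exp_pos).
  assert (0 < Rpower (1 - p (S j)) beta) by (unfold Rpower; apply exp_pos).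
  assert (0 < (p (S j) - p j) * (kk j * Rpower (1 - p (S j)) beta)).
  { apply Rmult_lt_0_compat; auto. apply Rmult_lt_0_compat; auto. }
  lra.
Qed.
End NB.

Lemma not_Dhat_nb beta : 0 < beta -> ~ Dhat (nb beta).
Proof.
  intros hb [Hrad [C [HC1 HC]]].
  destruct (INR_unbounded (ln C / (2 * beta))) as [n Hn].
  assert (HCn : C < exp (2 * beta * INR n)).
  { rewrite <- (exp_ln C) by lra. apply exp_increasing.
    apply Rmult_lt_compat_l with (r := 2 * beta) in Hn; [|lra].
    field_simplify in Hn; lra. }
  set (i := (n * n)%nat).
  set (E := exp (- (INR i + 1))).
  assert (HE : E = exp (- INR i) * exp (-1)) by (unfold E; rewrite <- exp_plus; f_equal; ring).
  assert (HEp : 0 < E) by apply exp_pos.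
  set (r := 1 - 2 * E).
  assert (Hpi : p i <= r).
  { unfold r, p. rewrite HE. pose proof em1_lt. pose proof (exp_pos (- INR i)). nra. }
  assert (HpSi : p (S i) = 1 - E) by (unfold p, E; rewrite S_INR; auto).
  assert (Hm : (1 + r) / 2 = p (S i)) by (rewrite HpSi; unfold r; field).
  pose proof (p_ge0 i) as Hp0.
  assert (Hr : 0 <= r < 1) by (unfold r; lra).
  destruct (proj2 Hrad r Hr) as [L1 [H1 _]].
  destruct (proj2 Hrad ((1 + r) / 2) ltac:(lra)) as [L2 [H2 _]].
  specialize (HC r L1 L2 Hr H1 H2). rewrite Hm in H2.
  pose proof (tail_ge (nb beta) r L1 (p (S i)) (nb_integ beta) (nb_nonneg beta)
     H1 ltac:(lra) ltac:(lra) (p_lt1 _)) as Hl1.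
  pose proof (nb_piece_lower beta hb i r (p (S i)) Hpi ltac:(lra) ltac:(lra)) as Hl2.
  assert (Hlow : exp (-1 - INR n - beta * (INR i + 1)) <= L1).
  { assert (Hk : kk i = exp (INR i - INR n)).
    { unfold kk, i. rewrite isq_sq, Nat.sqrt_square. auto. }
    assert (Hrp : Rpower (1 - p (S i)) beta = exp (- beta * (INR i + 1))).
    { rewrite HpSi. replace (1 - (1 - E)) with E by ring. unfold Rpower, E. rewrite ln_exp.
      f_equal; ring. }
    rewrite Hk, Hrp in Hl2. replace (p (S i) - r) with E in Hl2 by (rewrite HpSi; unfold r; ring).
    unfold E in Hl2. rewrite <- !exp_plus in Hl2.
    replace (-1 - INR n - beta * (INR i + 1)) with (- (INR i + 1) + (INR i - INR n + - beta * (INR i + 1))) by ring.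
    lra. }
  set (K := exp (- beta * INR (S n * S n))).
  assert (HK : 0 < K) by apply exp_pos.
  assert (Hpt : forall s, p (S i) < s < 1 -> nb beta s <= K * nu s).
  { intros s Hs. pose proof (p_ge0 (S i)).
    pose proof (idx_spec s ltac:(lra)) as Hk. set (k := idx s) in *.
    unfold nb, weight_beta. unfold nu. fold k.
    destruct (isq k) eqn:Eq.
    - pose proof Eq as Eq'. unfold isq in Eq'. apply Nat.eqb_eq in Eq'.
      set (q := Nat.sqrt k) in *.
      assert (HSk : (S i < S k)%nat).
      { destruct (Nat.lt_ge_cases i k) as [h|h]; [lia|].
        assert (p (S k) <= p (S i)) by (apply p_le; lia). lra. }
      assert (Hq : (S n * S n <= k)%nat).
      { unfold i in HSk. rewrite <- Eq' in HSk. assert (Hnq : (n < q)%nat).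
        { destruct (Nat.lt_ge_cases n q) as [h|h]; auto.
          pose proof (Nat.mul_le_mono q n q n h h). lia. }
        rewrite <- Eq'. apply Nat.mul_le_mono; lia. }
      assert (Hs1 : 1 - s <= exp (- INR (S n * S n))).
      { pose proof (p_le _ _ Hq). unfold p in H0, Hk. lra. }
      assert (Hrp : Rpower (1 - s) beta <= K).
      { unfold Rpower, K. apply exp_le_exp.
        assert (ln (1 - s) <= - INR (S n * S n)).
        { rewrite <- (ln_exp (- INR (S n * S n))). apply ln_le'; lra. }
        replace (- beta * INR (S n * S n)) with (beta * (- INR (S n * S n))) by ring.
        apply Rmult_le_compat_l; lra. }
      rewrite (Rmult_comm K). apply Rmult_le_compat_l; [apply kk_ge0 | exact Hrp].
    - unfold kk at 1. rewrite Eq. rewrite Rmult_0_l. apply Rmult_le_pos; [lra | apply kk_ge0]. }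
  assert (Hup : L2 <= K * exp (- INR (S n))).
  { apply (tail_le (nb beta) (p (S i)) L2 _ (nb_integ beta) H2 ltac:(split; [apply p_ge0|apply p_lt1])).
    intros b Hb. destruct (exists_p_ge b ltac:(lra)) as [N HN].
    pose proof (p_ge0 (S i)).
    assert (Hex : ex_RInt nu (p (S i)) b) by (apply nu_integ; lra).
    assert (Hex2 : ex_RInt (fun x => K * nu x) (p (S i)) b) by exact (ex_RInt_scal nu _ _ K Hex).
    assert (H3 : RInt (nb beta) (p (S i)) b <= RInt (fun x => K * nu x) (p (S i)) b).
    { apply (RInt_le (nb beta) (fun x => K * nu x)); [lra| apply (nb_integ beta); lra | exact Hex2 |].
      intros x Hx. apply Hpt; lra. }
    assert (Hsc : RInt (fun x => K * nu x) (p (S i)) b = K * RInt nu (p (S i)) b)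
      by exact (RInt_scal nu _ _ K Hex).
    rewrite Hsc in H3.
    assert (H4 : RInt nu (p (S i)) b <= RInt nu (p (S i)) (p N)).
    { apply RInt_sub; auto using nu_integ, nu_nonneg; try lra. apply p_lt1. }
    assert (H5 : I N - I (S i) = RInt nu (p (S i)) (p N)).
    { unfold I. rewrite (chasles nu 0 (p (S i)) (p N)). ring.
      apply nu_integ; [lra|lra|apply p_lt1]. apply nu_integ; [lra|lra|apply p_lt1]. }
    rewrite I_formula, I_formula in H5.
    assert (Hsu : Nat.sqrt_up (S i) = S n) by (unfold i; apply sqrt_up_next_sq).
    rewrite Hsu in H5.
    pose proof (exp_pos (- INR (Nat.sqrt_up N))).
    assert (RInt nu (p (S i)) b <= exp (- INR (S n))) by lra.
    apply Rmult_le_compat_l with (r := K) in H6; lra. }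
  assert (Heq : exp (-1 - INR n - beta * (INR i + 1)) = exp (2 * beta * INR n) * (K * exp (- INR (S n)))).
  { unfold K. rewrite <- !exp_plus. f_equal. unfold i. rewrite !mult_INR, S_INR. ring. }
  set (B := K * exp (- INR (S n))) in *.
  assert (HB : 0 < B) by (unfold B; apply Rmult_lt_0_compat; [exact HK | apply exp_pos]).
  assert (C * L2 <= C * B) by (apply Rmult_le_compat_l; lra).
  assert (exp (2 * beta * INR n) * B <= C * B) by lra.
  assert (exp (2 * beta * INR n) <= C).
  { apply Rmult_le_reg_r with B; auto. }
  lra.
Qed.

Theorem proposition10 (beta : R) (hbeta : 0 < beta) :
  exists nu : R -> R,
    Dhat nu /\ radial_weight (weight_beta nu beta) /\ ~ Dhat (weight_beta nu beta).
Proof.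
  exists nu. split; [apply Dhat_nu|]. split.
  - apply (nb_radial beta hbeta).
  - apply (not_Dhat_nb beta hbeta).
Qed.
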